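(* Let $q$ be a prime power and $d\le n\le m$ integers, let $\tau=\lfloor (d-1)/2\rfloor+1$, and assume $d\le n-1$ when $d$ is odd. Then there exist a code $\mathcal C\subseteq\mathbb F_{q^m}^n$ with minimum rank distance at least $d$ and a word $\mathbf r\in\mathbb F_{q^m}^n$ such that $|\mathcal C\cap\mathcal B_\tau(\mathbf r)|\ge q^{n-\tau}$.
   Context: Fixing a basis of $\mathbb F_{q^m}$ over $\mathbb F_q$, each vector in $\mathbb F_{q^m}^n$ is identified with an $m\times n$ matrix over $\mathbb F_q$; $\mathrm{rk}$ denotes its rank. The minimum rank distance of $\mathcal C$ is $\min\{\mathrm{rk}(\mathbf c_1-\mathbf c_2):\mathbf c_1\ne\mathbf c_2\in\mathcal C\}$, and $\mathcal B_\tau(\mathbf r)=\{\mathbf x:\mathrm{rk}(\mathbf x-\mathbf r)\le\tau\}$. Codes need not be linear. *)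

(* Defs.v *)
From HB Require Import structures.
From mathcomp Require Import all_boot all_order all_algebra all_field.
Set Implicit Arguments. Unset Strict Implicit. Unset Printing Implicit Defensive.
Import GRing.Theory.
Local Open Scope ring_scope.

(* Vectors of F_{q^m}^n are identified (via a fixed F_q-basis of F_{q^m})
   with m x n matrices over F = F_q; rk is the matrix rank over F_q. *)

Definition min_rank_dist_ge (F : finFieldType) (m n : nat)
  (C : {set 'M[F]_(m, n)}) (d : nat) : Prop :=
  forall c1 c2, c1 \in C -> c2 \in C -> c1 != c2 -> leq d (\rank (c1 - c2)%R).

Definition rk_ball (F : finFieldType) (m n : nat) (tau : nat)
  (r : 'M[F]_(m, n)) : {set 'M[F]_(m, n)} :=
  [set x | leq (\rank (x - r)%R) tau].

(* Main.v *)
Require Import Defs.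
From HB Require Import structures.
From mathcomp Require Import all_boot all_order all_algebra all_field.
From mathcomp Require Import zify.
Set Implicit Arguments. Unset Strict Implicit. Unset Printing Implicit Defensive.
Import GRing.Theory.

Section Helpers.
Local Open Scope ring_scope.

Lemma card_natr0 (F : finFieldType) : (#|F|%:R : F) = 0.
Proof.
have [p pr_p pcharFp] := finPcharP F.
rewrite (card_pprimeChar pcharFp) natrX (pcharf0 pcharFp) expr0n.
case: eqP => // H; exfalso.
have := finNzRing_gt1 F; rewrite (card_pprimeChar pcharFp).
by rewrite H expn0.
Qed.

Lemma ext_exists (F : finFieldType) k : (0 < k)%N ->
  exists L : fieldExtType F, \dim {:L} = k.
Proof.
move=> k_gt0; set m := (#|F| ^ k)%N.
have m_gt1: (m > 1)%N by rewrite (ltn_exp2l 0) ?finNzRing_gt1.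
have m_gt0 := ltnW m_gt1; have m1_gt0: (m.-1 > 0)%N by rewrite -ltnS prednK.
pose q (R : nzRingType) : {poly R} := 'X^m - 'X.
have Dq R: q R = ('X^(m.-1) - 1) * ('X - 0).
  by rewrite subr0 mulrBl mul1r -exprSr prednK.
have /FinSplittingFieldFor[/= L splitLq]: q F != 0.
  by rewrite Dq monic_neq0 ?rpredM ?monicXsubC ?monicXnsubC.
rewrite rmorphB rmorphXn /= map_polyX -/(q L) in splitLq.
exists L.
have /finField_galois_generator[/= a _ Da]: (1 <= {:L})%VS by apply: sub1v.
pose Em := fixedSpace (a ^+ k)%g; rewrite dimv1 expn1 in Da.
have{splitLq} [zs DqL defL] := splitLq.
have Uzs: uniq zs.
  rewrite -separable_prod_XsubC -(eqp_separable DqL) Dq separable_root andbC.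
  rewrite /root !hornerE subr_eq0 eq_sym expr0n gtn_eqF ?oner_eq0 //=.
  rewrite cyclotomic.separable_Xn_sub_1 // -subn1 natrB // subr_eq0.
  rewrite natrX.
  have -> : (#|F|%:R : L) = (#|F|%:R : F)%:A by rewrite -in_algE rmorph_nat.
  rewrite card_natr0 scale0r.
  by rewrite expr0n gtn_eqF // eq_sym oner_eq0.
have in_zs: zs =i Em.
  move=> z; rewrite -root_prod_XsubC -(eqp_root DqL) (sameP fixedSpaceP eqP).
  rewrite /root !hornerE subr_eq0 /= /m; congr (_ == z).
  elim: (k) => [|i IHi]; first by rewrite gal_id.
  by rewrite expgSr expnSr exprM IHi galM ?Da ?memvf.
have defEm: Em = {:L}%VS.
  apply/eqP; rewrite eqEsubv subvf -defL -[Em]subfield_closed agenvS //.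
  by rewrite subv_add sub1v; apply/span_subvP=> z; rewrite in_zs.
pose Fm := FinFieldExtType L.
have cardL : #|Fm| = m.
  suffices /eq_card->: Fm =i zs.
    apply: succn_inj; rewrite (card_uniqP _) //= -(size_prod_XsubC _ id).
    by rewrite -(eqp_size DqL) size_polyDl size_polyXn // size_polyN size_polyX.
  by move=> z; rewrite in_zs defEm memvf.
have : #|Fm| = (#|F| ^ \dim {:L})%N.
  have := @card_vspace F (finvect_type L) _ fullv.
  move=> <-; apply: eq_card => x; by rewrite memvf.
rewrite cardL /m => /eqP; rewrite eqn_exp2l ?finNzRing_gt1 // => /eqP.
by [].
Qed.
Lemma free_prefix (F : fieldType) (L : vectType F) K t (e : K.-tuple L) :
  free e -> (t.+1 <= K)%N -> forall y : 'rV[F]_t.+1,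
  \sum_(i < t.+1) y 0 i *: e`_i = 0 -> y = 0.
Proof.
move=> /freeP fe leK y Hy.
pose k (j : 'I_K) := if (j < t.+1)%N then y 0 (inord j) else 0.
have Hk : \sum_(j < K) k j *: e`_j = 0.
  rewrite -[RHS]Hy.
  transitivity (\sum_(j < K | (j < t.+1)%N) y 0 (inord j) *: e`_j).
    rewrite [RHS]big_mkcond /=; apply: eq_bigr => j _; rewrite /k.
    by case: ifP => // _; rewrite scale0r.
  transitivity (\sum_(i < t.+1) y 0 (inord i) *: e`_i); last first.
    by apply: eq_bigr => i _; rewrite inord_val.
  by rewrite (big_ord_widen K (fun j : nat => y 0 (inord j) *: e`_j) leK).
apply/rowP => i; rewrite mxE.
have := fe k Hk (widen_ord leK i); rewrite /k /= ltn_ord.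
by move=> <-; rewrite inord_val.
Qed.

Lemma mrd_field (F : finFieldType) (L : fieldExtType F) t :
  (t.+1 <= \dim {:L})%N ->
  exists f : 'rV[F]_(\dim {:L}) -> 'M[F]_(t.+1, \dim {:L}),
    forall u v, u != v -> \rank (f u - f v) = t.+1.
Proof.
move=> leK.
set K := \dim {:L} in leK *.
pose e : K.-tuple L := vbasis fullv.
have fe : free e := basis_free (vbasisP fullv).
pose a (u : 'rV[F]_K) : L := \sum_j u 0 j *: e`_j.
pose M (x : L) : 'M[F]_(t.+1, K) := \matrix_(i, j) coord e j (x * e`_i).
exists (fun u => M (a u)) => u v neq_uv.
have -> : M (a u) - M (a v) = M (a u - a v).
  by apply/matrixP => i j; rewrite !mxE mulrBl linearB.
have nz : a u - a v != 0.
  apply: contra neq_uv => /eqP H.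
  rewrite -subr_eq0; apply/eqP/rowP => j.
  rewrite [RHS]mxE; apply: ((elimT freeP fe) (fun j => (u - v) 0 j)).
  rewrite -[RHS]H /a -sumrB; apply: eq_bigr => i _; by rewrite !mxE scalerBl.
apply/eqP; rewrite -/(row_free _); apply/inj_row_free => y Hy.
apply: (free_prefix fe leK).
set w := \sum_(i < t.+1) _.
have : (a u - a v) * w = 0.
  rewrite (coord_vbasis (memvf ((a u - a v) * w))) -/e.
  apply: big1 => j _.
  have := congr1 (fun r : 'rV_K => r 0 j) Hy; rewrite !mxE => Hj.
  suff -> : coord e j ((a u - a v) * w) = 0 by rewrite scale0r.
  rewrite -[RHS]Hj /w mulr_sumr linear_sum; apply: eq_bigr => i _.
  by rewrite !mxE -scalerAr linearZ.
by move/eqP; rewrite mulf_eq0 (negbTE nz) => /eqP.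
Qed.
Lemma rank_blk (F : fieldType) t k p (D : 'M[F]_(t, k)) (X : 'M[F]_(k, k)) :
  (\rank D + \rank D <= \rank (col_mx (row_mx 0 D) (col_mx (row_mx D^T X) (0 : 'M_(p, t + k)))))%N.
Proof.
set Y := col_mx _ _.
pose P : 'M[F]_(t + k, t) := col_mx 1%:M 0.
rewrite -(mxrank_mul_ker Y P).
apply: leq_add.
  rewrite /Y /P !mul_col_mx !mul_row_col !mulmx0 !mulmx1 !addr0 mul0mx.
  by rewrite rank_col_0mx rank_col_mx0 mxrank_tr.
rewrite -(@rank_row_0mx F t k t D).
apply: mxrankS; rewrite sub_capmx; apply/andP; split.
  by rewrite /Y -addsmxE addsmxSl.
by apply/sub_kermxP; rewrite /P mul_row_col mulmx0 mul0mx addr0.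
Qed.

Lemma main_gen (F : finFieldType) t k r d : (0 < t)%N -> (t <= k)%N -> (d <= t + t)%N ->
  exists (C : {set 'M[F]_(t + (k + r), t + k)}) (r0 : 'M[F]_(t + (k + r), t + k)),
    min_rank_dist_ge C d /\ (#|F| ^ k <= #|C :&: rk_ball t r0|)%N.
Proof.
case: t => // t _ letk led.
have [L Hdim] := ext_exists F (leq_trans (ltn0Sn t) letk).
have [f Hf] : exists f : 'rV[F]_k -> 'M[F]_(t.+1, k),
    forall u v, u != v -> \rank (f u - f v) = t.+1.
  by rewrite -Hdim; apply: mrd_field; rewrite Hdim.
pose c (u : 'rV[F]_k) : 'M[F]_(t.+1 + (k + r), t.+1 + k) :=
  col_mx (1%:M : 'M_t.+1) (col_mx (f u)^T (0 : 'M_(r, t.+1))) *m row_mx (1%:M : 'M_t.+1) (f u).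
have Ediff u v : c u - c v = col_mx (row_mx 0 (f u - f v))
   (col_mx (row_mx (f u - f v)^T ((f u)^T *m f u - (f v)^T *m f v)) 0).
  rewrite /c !mul_col_mx !mul_mx_row !mul1mx !mul0mx !opp_col_mx !add_col_mx.
  by rewrite !opp_row_mx !add_row_mx subrr linearB /= subrr !mulmx1 subr0 row_mx0.
have Hrk u v : u != v -> (t.+1 + t.+1 <= \rank (c u - c v)%R)%N.
  move=> /Hf H; rewrite Ediff; have := rank_blk r (f u - f v) ((f u)^T *m f u - (f v)^T *m f v); by rewrite H.
have c_inj : injective c.
  move=> u v Huv; apply/eqP; apply: contraT => /Hrk.
  by rewrite Huv subrr mxrank0.
exists [set c u | u : 'rV[F]_k], 0; split.
  move=> c1 c2 /imsetP[u _ ->] /imsetP[v _ ->] neq.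
  apply: leq_trans led (Hrk u v _).
  by apply: contra neq => /eqP ->.
have -> : [set c u | u : 'rV[F]_k] :&: rk_ball t.+1 0 = [set c u | u : 'rV[F]_k].
  apply/setIidPl/subsetP => x /imsetP[u _ ->]; rewrite inE subr0.
  exact: leq_trans (mxrankM_maxr _ _) (rank_leq_row _).
by rewrite card_imset // card_mx mul1n.
Qed.
End Helpers.

Theorem corollary2 (F : finFieldType) (m n d : nat) :
  (0 < d)%N -> (d <= n)%N -> (n <= m)%N ->
  (odd d -> (d <= n - 1)%N) ->
  let q := #|F| in
  let tau := ((d - 1)./2 + 1)%N in
  exists (C : {set 'M[F]_(m, n)}) (r : 'M[F]_(m, n)),
    min_rank_dist_ge C d /\
    (q ^ (n - tau) <= #|C :&: rk_ball tau r|)%N.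
Proof.
move=> hd hdn hnm hodd q tau.
have Hh := odd_double_half (d - 1).
rewrite oddB // /= in Hh.
have [tau_pos [two_tau led]] : (0 < tau /\ tau + tau <= n /\ d <= tau + tau)%N.
  rewrite /tau; move: Hh hodd; set h := (d - 1)./2.
  rewrite -addnn.
  case: (odd d) => /= Hh hodd'.
    have := hodd' isT; clear hodd'; clearbody h tau q; lia.
  clear hodd'; clearbody h tau q; lia.
clearbody tau.
have [k Ek] : exists k, n = (tau + k)%N by exists (n - tau)%N; clear hodd Hh; clearbody q; lia.
have [r Er] : exists r, m = (tau + (k + r))%N by exists (m - n)%N; clear hodd Hh; clearbody q; lia.
rewrite /q Er Ek addKn.
apply: main_gen => //; clear hodd Hh; lia.
Qed.
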